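(* If $p_1,\dots,p_n\in\mathrm{ESPR}$, then there exists $h\in\mathrm{PR}\cap\mathscr{A}_0$ such that $p_1,\dots,p_n\in\mathcal{P}_h$.
   Context: $\mathscr{H}_\infty$: functions analytic and bounded on $\mathrm{Re}(s)>0$; $\mathscr{A}_0$: those in $\mathscr{H}_\infty$ extending continuously to $j\mathbb{R}\cup\{\infty\}$. $g\in\mathrm{PR}$ if $g$ is analytic in $\mathrm{Re}(s)>0$, real for positive real $s$, and $\mathrm{Re}(g(s))\ge0$ for $\mathrm{Re}(s)>0$; $g\in\mathrm{ESPR}$ if moreover $g\in\mathscr{A}_0$ and $g-\epsilon\in\mathrm{PR}$ for some $\epsilon>0$. $\mathcal{P}_h:=\{p\in\mathscr{H}_\infty: p(0)\ne0,\ h(s)(1+p(s)/s)\in\mathrm{ESPR}\}$. *)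

(* Defs.v *)
From Stdlib Require Import Reals Lra.
Open Scope R_scope.

Definition Cx : Type := (R * R)%type.
Definition Re (z : Cx) : R := fst z.
Definition Im (z : Cx) : R := snd z.
Definition RtoC (x : R) : Cx := (x, 0).
Definition Cadd (z w : Cx) : Cx := (Re z + Re w, Im z + Im w).
Definition Copp (z : Cx) : Cx := (- Re z, - Im z).
Definition Csub (z w : Cx) : Cx := Cadd z (Copp w).
Definition Cmul (z w : Cx) : Cx :=
  (Re z * Re w - Im z * Im w, Re z * Im w + Im z * Re w).
Definition Cinv (z : Cx) : Cx :=
  (Re z / (Re z ^ 2 + Im z ^ 2), - Im z / (Re z ^ 2 + Im z ^ 2)).
Definition Cdiv (z w : Cx) : Cx := Cmul z (Cinv w).
Definition Cnorm (z : Cx) : R := sqrt (Re z ^ 2 + Im z ^ 2).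
Definition C0 : Cx := (0, 0).
Definition C1 : Cx := (1, 0).

Definition RHP (s : Cx) : Prop := 0 < Re s.

(* complex differentiability (= analyticity) on the open right half-plane;
   only the values of f on Re s > 0 matter *)
Definition Cdifferentiable_at (f : Cx -> Cx) (z : Cx) : Prop :=
  exists l : Cx, forall eps : R, 0 < eps -> exists delta : R, 0 < delta /\
    forall h : Cx, 0 < Cnorm h < delta ->
      Cnorm (Csub (Cdiv (Csub (f (Cadd z h)) (f z)) h) l) < eps.

Definition analytic_RHP (f : Cx -> Cx) : Prop :=
  forall s, RHP s -> Cdifferentiable_at f s.

Definition H_inf (f : Cx -> Cx) : Prop :=
  analytic_RHP f /\ exists M : R, forall s, RHP s -> Cnorm (f s) <= M.

(* A_0: elements of H_inf extending continuously to jR ∪ {∞}, i.e. to the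
   closed right half-plane together with the point at infinity *)
Definition A0 (f : Cx -> Cx) : Prop :=
  H_inf f /\
  exists (g : Cx -> Cx) (Linf : Cx),
    (forall s, RHP s -> g s = f s) /\
    (forall s0, 0 <= Re s0 -> forall eps, 0 < eps -> exists delta, 0 < delta /\
        forall s, 0 <= Re s -> Cnorm (Csub s s0) < delta ->
          Cnorm (Csub (g s) (g s0)) < eps) /\
    (forall eps, 0 < eps -> exists Rb : R,
        forall s, 0 <= Re s -> Rb < Cnorm s -> Cnorm (Csub (g s) Linf) < eps).

Definition PR (g : Cx -> Cx) : Prop :=
  analytic_RHP g /\
  (forall x : R, 0 < x -> Im (g (RtoC x)) = 0) /\
  (forall s, RHP s -> 0 <= Re (g s)).

Definition ESPR (g : Cx -> Cx) : Prop :=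
  A0 g /\ exists eps : R, 0 < eps /\ PR (fun s => Csub (g s) (RtoC eps)).

(* "p(0) <> 0": the boundary value of p at 0 (limit of p(s) as s -> 0 with
   Re s > 0) exists and is nonzero *)
Definition value_at_0_nonzero (p : Cx -> Cx) : Prop :=
  exists c : Cx, c <> C0 /\
    forall eps, 0 < eps -> exists delta, 0 < delta /\
      forall s, RHP s -> Cnorm s < delta -> Cnorm (Csub (p s) c) < eps.

Definition P_class (h : Cx -> Cx) (p : Cx -> Cx) : Prop :=
  H_inf p /\ value_at_0_nonzero p /\
  ESPR (fun s => Cmul (h s) (Cadd C1 (Cdiv (p s) s))).

(* Main.v *)
Require Import Defs.
From Stdlib Require Import Reals.
Open Scope R_scope.
From Stdlib Require Import Lra Lia.
From Coquelicot Require Import Coquelicot.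
Open Scope R_scope.

Definition lim0 (P : C -> Prop) (phi : C -> C) (l : C) : Prop :=
  forall eps, 0 < eps -> exists d, 0 < d /\
    forall h, P h -> Cmod h < d -> Cmod (phi h - l)%C < eps.

Lemma lim0_const P c : lim0 P (fun _ => c) c.
Proof. intros e He. exists 1; split; [lra|]. intros h _ _.
  replace (c - c)%C with (RtoC 0) by ring. rewrite Cmod_0; lra. Qed.

Lemma lim0_id P : lim0 P (fun h => h) (RtoC 0).
Proof. intros e He. exists e; split; [lra|]. intros h _ Hh.
  replace (h - 0)%C with h by ring. exact Hh. Qed.

Lemma lim0_weaken (P Q : C -> Prop) f l : (forall h, Q h -> P h) -> lim0 P f l -> lim0 Q f l.
Proof. intros HQ H e He. destruct (H e He) as [d [Hd H']]. exists d; split; auto. Qed.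

Lemma lim0_ext_loc P f g l :
  (exists d, 0 < d /\ forall h, P h -> Cmod h < d -> f h = g h) ->
  lim0 P g l -> lim0 P f l.
Proof. intros [d0 [Hd0 Heq]] H e He. destruct (H e He) as [d [Hd H']].
  exists (Rmin d0 d); split. apply Rmin_glb_lt; auto.
  intros h Ph Hh. rewrite Heq; auto.
  apply H'; auto. eapply Rlt_le_trans; [exact Hh| apply Rmin_r].
  eapply Rlt_le_trans; [exact Hh| apply Rmin_l]. Qed.

Lemma lim0_add P f g lf lg : lim0 P f lf -> lim0 P g lg ->
  lim0 P (fun h => f h + g h)%C (lf + lg)%C.
Proof. intros Hf Hg e He.
  destruct (Hf (e/2)) as [d1 [Hd1 H1]]; [lra|].
  destruct (Hg (e/2)) as [d2 [Hd2 H2]]; [lra|].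
  exists (Rmin d1 d2); split. apply Rmin_glb_lt; auto.
  intros h Ph Hh.
  assert (h1 : Cmod h < d1) by (eapply Rlt_le_trans; [exact Hh| apply Rmin_l]).
  assert (h2 : Cmod h < d2) by (eapply Rlt_le_trans; [exact Hh| apply Rmin_r]).
  replace (f h + g h - (lf + lg))%C with ((f h - lf) + (g h - lg))%C by ring.
  eapply Rle_lt_trans; [apply Cmod_triangle|].
  specialize (H1 h Ph h1); specialize (H2 h Ph h2); lra. Qed.

Lemma lim0_opp P f l : lim0 P f l -> lim0 P (fun h => - f h)%C (- l)%C.
Proof. intros H e He. destruct (H e He) as [d [Hd H']]. exists d; split; auto.
  intros h Ph Hh. replace (- f h - - l)%C with (- (f h - l))%C by ring.
  rewrite Cmod_opp; auto. Qed.

Lemma Cmod_sub_sym a b : Cmod (a - b)%C = Cmod (b - a)%C.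
Proof. replace (a - b)%C with (- (b - a))%C by ring. apply Cmod_opp. Qed.

Lemma Cmod_lower a l : Cmod l - Cmod (a - l)%C <= Cmod a.
Proof. pose proof (Cmod_triangle a (l - a)%C).
  replace (a + (l - a))%C with l in H by ring. rewrite Cmod_sub_sym. lra. Qed.

Lemma lim0_mul P f g lf lg : lim0 P f lf -> lim0 P g lg ->
  lim0 P (fun h => f h * g h)%C (lf * lg)%C.
Proof. intros Hf Hg e He.
  pose proof (Cmod_ge_0 lf) as Hlf. pose proof (Cmod_ge_0 lg) as Hlg.
  destruct (Hf (e / (2 * (Cmod lg + 1)))) as [d1 [Hd1 H1]].
  { apply Rdiv_lt_0_compat; lra. }
  destruct (Hg (Rmin 1 (e / (2 * (Cmod lf + 1))))) as [d2 [Hd2 H2]].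
  { apply Rmin_glb_lt; [lra|]. apply Rdiv_lt_0_compat; lra. }
  exists (Rmin d1 d2); split. apply Rmin_glb_lt; auto.
  intros h Ph Hh.
  assert (h1 : Cmod h < d1) by (eapply Rlt_le_trans; [exact Hh| apply Rmin_l]).
  assert (h2 : Cmod h < d2) by (eapply Rlt_le_trans; [exact Hh| apply Rmin_r]).
  specialize (H1 h Ph h1); specialize (H2 h Ph h2).
  assert (H2a : Cmod (g h - lg)%C < 1) by (eapply Rlt_le_trans; [exact H2|apply Rmin_l]).
  assert (H2b : Cmod (g h - lg)%C < e / (2 * (Cmod lf + 1))) by (eapply Rlt_le_trans; [exact H2|apply Rmin_r]).
  replace (f h * g h - lf * lg)%C with ((f h - lf) * g h + lf * (g h - lg))%C by ring.
  eapply Rle_lt_trans; [apply Cmod_triangle|]. rewrite !Cmod_mult.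
  assert (Hgb : Cmod (g h) <= Cmod lg + 1).
  { pose proof (Cmod_triangle (g h - lg)%C lg). replace (g h - lg + lg)%C with (g h) in H by ring. lra. }
  set (A := Cmod (f h - lf)%C) in *. set (B := Cmod (g h - lg)%C) in *.
  assert (0 <= A) by apply Cmod_ge_0. assert (0 <= B) by apply Cmod_ge_0.
  assert (A * Cmod (g h) <= A * (Cmod lg + 1)) by (apply Rmult_le_compat_l; lra).
  assert (A * (Cmod lg + 1) < e/2).
  { assert (e / (2 * (Cmod lg + 1)) * (Cmod lg + 1) = e/2) by (field; lra).
    assert (A * (Cmod lg + 1) < e / (2 * (Cmod lg + 1)) * (Cmod lg + 1)) by (apply Rmult_lt_compat_r; lra). lra. }
  assert (Cmod lf * B <= B * (Cmod lf + 1)) by nra.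
  assert (B * (Cmod lf + 1) < e/2).
  { assert (e / (2 * (Cmod lf + 1)) * (Cmod lf + 1) = e/2) by (field; lra).
    assert (B * (Cmod lf + 1) < e / (2 * (Cmod lf + 1)) * (Cmod lf + 1)) by (apply Rmult_lt_compat_r; lra). lra. }
  lra. Qed.

Lemma lim0_inv P f l : l <> RtoC 0 -> lim0 P f l -> lim0 P (fun h => / f h)%C (/ l)%C.
Proof. intros Hl H e He.
  assert (HL : 0 < Cmod l) by (apply Cmod_gt_0; auto).
  destruct (H (Rmin (Cmod l / 2) (e * (Cmod l * Cmod l) / 2))) as [d [Hd H']].
  { apply Rmin_glb_lt; [lra|]. apply Rdiv_lt_0_compat; [|lra]. apply Rmult_lt_0_compat; nra. }
  exists d; split; auto. intros h Ph Hh. specialize (H' h Ph Hh).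
  assert (Ha : Cmod (f h - l)%C < Cmod l / 2) by (eapply Rlt_le_trans; [exact H'|apply Rmin_l]).
  assert (Hb : Cmod (f h - l)%C < e * (Cmod l * Cmod l) / 2) by (eapply Rlt_le_trans; [exact H'|apply Rmin_r]).
  pose proof (Cmod_lower (f h) l).
  assert (HA : 0 < Cmod (f h)) by lra.
  assert (Hfh : f h <> RtoC 0) by (apply Cmod_gt_0; auto).
  replace (/ f h - / l)%C with ((l - f h) * / f h * / l)%C by (field; auto).
  rewrite !Cmod_mult, !Cmod_inv by auto. rewrite <- Cmod_sub_sym.
  set (E := Cmod (f h - l)%C) in *. set (A := Cmod (f h)) in *. set (L := Cmod l) in *.
  replace (E * / A * / L) with (E / (A * L)) by (field; lra).
  apply Rlt_div_l. nra.
  assert (0 < e * L) by nra. assert (0 < (A - L/2) * (e * L)) by (apply Rmult_lt_0_compat; lra). nra. Qed.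

Lemma lim0_eq P f l l' : l = l' -> lim0 P f l -> lim0 P f l'.
Proof. intros ->; auto. Qed.

Definition cont_at (D : C -> Prop) (f : C -> C) (z : C) :=
  lim0 (fun h => D (z + h)%C) (fun h => f (z + h)%C) (f z).

Lemma cont_const D c z : cont_at D (fun _ => c) z.
Proof. apply lim0_const. Qed.
Lemma cont_id D z : cont_at D (fun s => s) z.
Proof. unfold cont_at. eapply lim0_eq; [|apply lim0_add; [apply lim0_const|apply lim0_id]]. ring. Qed.
Lemma cont_add D f g z : cont_at D f z -> cont_at D g z -> cont_at D (fun s => f s + g s)%C z.
Proof. intros; apply lim0_add; auto. Qed.
Lemma cont_mul D f g z : cont_at D f z -> cont_at D g z -> cont_at D (fun s => f s * g s)%C z.
Proof. intros; apply lim0_mul; auto. Qed.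
Lemma cont_opp D f z : cont_at D f z -> cont_at D (fun s => - f s)%C z.
Proof. intros; apply lim0_opp; auto. Qed.
Lemma cont_inv D f z : f z <> RtoC 0 -> cont_at D f z -> cont_at D (fun s => / f s)%C z.
Proof. intros; apply lim0_inv; auto. Qed.

Definition diffl (f : C -> C) z l :=
  lim0 (fun h => h <> RtoC 0) (fun h => (f (z + h) - f z) / h)%C l.
Definition diffable f z := exists l, diffl f z l.

Lemma diff_cont f z l : diffl f z l -> lim0 (fun h => h <> RtoC 0) (fun h => f (z + h)%C) (f z).
Proof. intros H.
  apply lim0_ext_loc with (g := fun h => (f z + h * ((f (z + h) - f z) / h))%C).
  { exists 1; split; [lra|]. intros h Hh _. field. auto. }
  eapply lim0_eq; [|apply lim0_add; [apply lim0_const| apply lim0_mul; [apply lim0_id| exact H]]].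
  ring. Qed.

Lemma diffable_const c z : diffable (fun _ => c) z.
Proof. exists (RtoC 0). unfold diffl.
  apply lim0_ext_loc with (g := fun _ => RtoC 0).
  { exists 1; split; [lra|]. intros h Hh _. field. auto. }
  apply lim0_const. Qed.

Lemma diffable_id z : diffable (fun s => s) z.
Proof. exists (RtoC 1). unfold diffl.
  apply lim0_ext_loc with (g := fun _ => RtoC 1).
  { exists 1; split; [lra|]. intros h Hh _. field. auto. }
  apply lim0_const. Qed.

Lemma diffable_add f g z : diffable f z -> diffable g z -> diffable (fun s => f s + g s)%C z.
Proof. intros [lf Hf] [lg Hg]. exists (lf + lg)%C. unfold diffl.
  apply lim0_ext_loc with (g := fun h => ((f (z + h) - f z) / h + (g (z + h) - g z) / h)%C).
  { exists 1; split; [lra|]. intros h Hh _. field. auto. }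
  apply lim0_add; auto. Qed.

Lemma diffable_opp f z : diffable f z -> diffable (fun s => - f s)%C z.
Proof. intros [lf Hf]. exists (- lf)%C. unfold diffl.
  apply lim0_ext_loc with (g := fun h => (- ((f (z + h) - f z) / h))%C).
  { exists 1; split; [lra|]. intros h Hh _. field. auto. }
  apply lim0_opp; auto. Qed.

Lemma diffable_mul f g z : diffable f z -> diffable g z -> diffable (fun s => f s * g s)%C z.
Proof. intros [lf Hf] [lg Hg]. exists (lf * g z + f z * lg)%C. unfold diffl.
  apply lim0_ext_loc with (g := fun h => ((f (z + h) - f z) / h * g (z + h) + f z * ((g (z + h) - g z) / h))%C).
  { exists 1; split; [lra|]. intros h Hh _. field. auto. }
  apply lim0_add. apply lim0_mul; auto. apply (diff_cont _ _ _ Hg).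
  apply lim0_mul; auto. apply lim0_const. Qed.

Lemma diffable_inv g z : g z <> RtoC 0 -> diffable g z -> diffable (fun s => / g s)%C z.
Proof. intros Hz [lg Hg]. exists (- lg * / g z * / g z)%C. unfold diffl.
  pose proof (diff_cont _ _ _ Hg) as Hc.
  assert (HL : 0 < Cmod (g z)) by (apply Cmod_gt_0; auto).
  destruct (Hc (Cmod (g z)) HL) as [d [Hd Hd']].
  apply lim0_ext_loc with (g := fun h => (- ((g (z + h) - g z) / h) * / g (z + h) * / g z)%C).
  { exists d; split; auto. intros h Hh Hhd. specialize (Hd' h Hh Hhd).
    assert (g (z + h)%C <> RtoC 0).
    { intro E. rewrite E in Hd'. replace (RtoC 0 - g z)%C with (- g z)%C in Hd' by ring.
      rewrite Cmod_opp in Hd'. lra. }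
    field. auto. }
  apply lim0_mul; [|apply lim0_const]. apply lim0_mul. apply lim0_opp; auto.
  apply lim0_inv; auto. Qed.

Lemma diffable_Cdiff f z : diffable f z -> Cdifferentiable_at f z.
Proof. intros [l H]. exists l. intros e He. destruct (H e He) as [d [Hd H']].
  exists d; split; auto. intros h [H0 H1]. apply H'; auto. apply Cmod_gt_0. exact H0. Qed.

Lemma Cdiff_diffable f z : Cdifferentiable_at f z -> diffable f z.
Proof. intros [l H]. exists l. intros e He. destruct (H e He) as [d [Hd H']].
  exists d; split; auto. intros h H0 H1. apply H'; split; auto. apply Cmod_gt_0. exact H0. Qed.

Lemma Rle_mul_inv a b c : 0 < b -> a <= c * b -> a * / b <= c.
Proof. intros Hb H. apply (Rle_div_l a c b); auto. Qed.
Lemma Rlt_mul_inv a b c : 0 < b -> a < c * b -> a * / b < c.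
Proof. intros Hb H. apply (Rlt_div_l a c b); auto. Qed.

Lemma Cmod_shift s a : 0 <= fst s -> 0 < a ->
  Cmod s <= Cmod (s + RtoC a)%C /\ a <= Cmod (s + RtoC a)%C.
Proof. intros Hs Ha. destruct s as [x y]. simpl in Hs. unfold Cmod; simpl. split.
  - apply sqrt_le_1_alt. nra.
  - rewrite <- (sqrt_pow2 a) at 1 by lra. apply sqrt_le_1_alt. nra. Qed.

Lemma shift_nz s a : 0 <= fst s -> 0 < a -> (s + RtoC a)%C <> RtoC 0.
Proof. intros Hs Ha E. destruct (Cmod_shift s a Hs Ha) as [_ H]. rewrite E, Cmod_0 in H. lra. Qed.

Lemma RHP_nz s : RHP s -> s <> RtoC 0.
Proof. intros H E. rewrite E in H. unfold RHP in H. simpl in H. lra. Qed.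

Lemma A0_intro f g Linf : H_inf f -> (forall s, RHP s -> g s = f s) ->
  (forall s0, 0 <= fst s0 -> cont_at (fun s => 0 <= fst s) g s0) ->
  (forall eps, 0 < eps -> exists Rb, forall s, 0 <= fst s -> Rb < Cmod s -> Cmod (g s - Linf)%C < eps) ->
  A0 f.
Proof. intros Hf Heq Hc Hi. split; auto. exists g, Linf. split; auto. split; auto.
  intros s0 Hs0 e He. destruct (Hc s0 Hs0 e He) as [d [Hd H]]. exists d; split; auto.
  intros s Hs Hsd. specialize (H (s - s0)%C).
  assert (E : (s0 + (s - s0))%C = s :> C) by ring. rewrite E in H. apply H; auto. Qed.

Lemma A0_cont (g : C -> C) :
  (forall s0, 0 <= Re s0 -> forall eps, 0 < eps -> exists delta, 0 < delta /\
        forall s, 0 <= Re s -> Cnorm (Csub s s0) < delta ->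
          Cnorm (Csub (g s) (g s0)) < eps) ->
  forall s0, 0 <= fst s0 -> cont_at (fun s => 0 <= fst s) g s0.
Proof. intros H s0 Hs0 e He. destruct (H s0 Hs0 e He) as [d [Hd H']]. exists d; split; auto.
  intros h Hh Hhd. apply H'; auto. change (Cmod ((s0 + h) - s0)%C < d).
  assert (E : ((s0 + h) - s0)%C = h :> C) by ring. rewrite E. auto. Qed.

Lemma RHP_fst s : RHP s -> 0 <= fst s.
Proof. unfold RHP, Defs.Re. lra. Qed.

Lemma den_pos w : w <> RtoC 0 -> 0 < fst w ^ 2 + snd w ^ 2.
Proof. intros H. destruct w as [x y]. cbn [fst snd].
  destruct (Req_dec x 0); destruct (Req_dec y 0); try nra. subst. exfalso; apply H; reflexivity. Qed.

Lemma Re_div z w : w <> RtoC 0 ->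
  fst (z * / w)%C = (fst z * fst w + snd z * snd w) / (fst w ^ 2 + snd w ^ 2).
Proof. intros H. pose proof (den_pos w H). destruct z as [u v]; destruct w as [x y].
  unfold Cmult, Cinv; cbn [fst snd] in *. field. lra. Qed.

Lemma Im_div z w : w <> RtoC 0 ->
  snd (z * / w)%C = (snd z * fst w - fst z * snd w) / (fst w ^ 2 + snd w ^ 2).
Proof. intros H. pose proof (den_pos w H). destruct z as [u v]; destruct w as [x y].
  unfold Cmult, Cinv; cbn [fst snd] in *. field. lra. Qed.

Definition hfun (a : R) : C -> C := fun s => (s * / (s + RtoC a))%C.

Lemma hfun_PR a : 0 < a -> PR (hfun a).
Proof. intros Ha. split; [|split].
  - intros s Hs. apply diffable_Cdiff. unfold hfun. apply diffable_mul. apply diffable_id.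
    apply diffable_inv. apply shift_nz; [apply RHP_fst; auto| lra].
    apply diffable_add. apply diffable_id. apply diffable_const.
  - intros x Hx. unfold hfun, Cmult, Cinv, Cplus, RtoC, Defs.RtoC, Defs.Im; cbn [fst snd]. field. nra.
  - intros s Hs. pose proof (RHP_fst s Hs). unfold RHP, Defs.Re in *. unfold hfun.
    pose proof (shift_nz s a H Ha) as Hn. rewrite Re_div by auto. pose proof (den_pos _ Hn).
    apply Rdiv_le_0_compat; [|lra]. destruct s as [x y]; unfold Cplus, RtoC in *; cbn [fst snd] in *. nra. Qed.

Lemma hfun_A0 a : 0 < a -> A0 (hfun a).
Proof. intros Ha. apply A0_intro with (g := hfun a) (Linf := RtoC 1).
  - split. apply (proj1 (hfun_PR a Ha)). exists 1. intros s Hs.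
    change (Cmod (hfun a s) <= 1). unfold hfun.
    pose proof (RHP_fst s Hs) as Hs'.
    rewrite Cmod_mult, Cmod_inv by (apply shift_nz; auto).
    destruct (Cmod_shift s a Hs' Ha) as [H1 H2].
    apply Rle_mul_inv; lra.
  - auto.
  - intros s0 Hs0. unfold hfun. apply cont_mul. apply cont_id. apply cont_inv.
    apply shift_nz; auto. apply cont_add. apply cont_id. apply cont_const.
  - intros e He. exists (a / e). intros s Hs Hb. unfold hfun.
    pose proof (shift_nz s a Hs Ha) as Hnz.
    destruct (Cmod_shift s a Hs Ha) as [H1 H2].
    replace (s * / (s + RtoC a) - RtoC 1)%C with (- RtoC a * / (s + RtoC a))%C by (field; auto).
    rewrite Cmod_mult, Cmod_inv, Cmod_opp, Cmod_R, Rabs_pos_eq by (auto; lra).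
    apply Rlt_mul_inv. lra.
    apply Rlt_div_l in Hb; [|lra]. nra. Qed.

Section P.
Variable p : C -> C.
Variable a : R.
Hypothesis Ha : 0 < a.

Lemma keyF s : RHP s ->
  Defs.Cmul (hfun a s) (Defs.Cadd Defs.C1 (Defs.Cdiv (p s) s)) = ((s + p s) * / (s + RtoC a))%C.
Proof. intros Hs. pose proof (RHP_nz s Hs). pose proof (shift_nz s a (RHP_fst s Hs) Ha).
  unfold hfun. change ((s * / (s + RtoC a)) * (RtoC 1 + p s * / s) = (s + p s) * / (s + RtoC a) :> C)%C.
  field. auto. Qed.

Lemma diffF s : RHP s -> diffable p s ->
  diffable (fun s => (s * / (s + RtoC a)) * (RtoC 1 + p s * / s))%C s.
Proof. intros Hs Hp. apply diffable_mul. apply diffable_mul. apply diffable_id.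
  apply diffable_inv. apply shift_nz; [apply RHP_fst; auto|lra].
  apply diffable_add. apply diffable_id. apply diffable_const.
  apply diffable_add. apply diffable_const. apply diffable_mul. auto.
  apply diffable_inv. apply RHP_nz; auto. apply diffable_id. Qed.
End P.

Lemma per_p p : ESPR p -> exists a0, 0 < a0 /\ forall a, a0 <= a -> P_class (hfun a) p.
Proof.
  intros [[[Hana [M HM]] [gp [Linf [Heq [Hcont Hinf]]]]] [ep [Hep [_ [Hrealp Hrep]]]]].
  assert (HM' : forall s, RHP s -> Cmod (p s) <= M) by exact HM.
  assert (HM0 : 0 <= M).
  { assert (H1 : RHP (RtoC 1)) by (unfold RHP, Defs.Re; simpl; lra).
    pose proof (HM' _ H1). pose proof (Cmod_ge_0 (p (RtoC 1))). lra. }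
  assert (Hre : forall s, RHP s -> ep <= fst (p s)).
  { intros s Hs. specialize (Hrep s Hs).
    change (0 <= fst (p s) + - ep) in Hrep. lra. }
  assert (Him : forall x, 0 < x -> snd (p (RtoC x)) = 0).
  { intros x Hx. specialize (Hrealp x Hx).
    change (snd (p (RtoC x)) + - 0 = 0) in Hrealp. lra. }
  pose proof (A0_cont gp Hcont) as Hgc.
  assert (Hgb : forall s, 0 <= fst s -> Cmod (gp s) <= M + 1).
  { intros s Hs. destruct (Hgc s Hs 1 Rlt_0_1) as [d [Hd H]].
    specialize (H (RtoC (d/2))).
    assert (Hs1 : RHP (s + RtoC (d/2))%C).
    { unfold RHP, Defs.Re. destruct s; unfold Cplus, RtoC; simpl in *; lra. }
    pose proof (RHP_fst _ Hs1) as Hs1'.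
    rewrite Cmod_R, Rabs_pos_eq in H by lra.
    assert (H' : Cmod (gp (s + RtoC (d / 2))%C - gp s)%C < 1) by (apply H; auto; lra).
    rewrite Heq in H' by auto. pose proof (HM' _ Hs1).
    pose proof (Cmod_lower (p (s + RtoC (d / 2))%C) (gp s)). lra. }
  exists (ep + M * M / ep). split.
  { assert (0 <= M * M / ep) by (apply Rdiv_le_0_compat; nra). lra. }
  intros a Ha0.
  assert (HMe : M * M / ep * ep = M * M) by (field; lra).
  assert (Hpos : 0 <= M * M / ep) by (apply Rdiv_le_0_compat; nra).
  assert (Ha : 0 < a) by lra. assert (Hae : ep <= a) by lra.
  assert (HaM : M * M <= a * ep) by nra.
  split; [|split].
  - split; auto. exists M; auto.
  - exists (gp (RtoC 0)). assert (H00 : 0 <= fst (RtoC 0)) by (simpl; lra). split.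
    + intro Hc0. destruct (Hgc (RtoC 0) H00 ep Hep) as [d [Hd H]].
      assert (Hs1 : RHP (RtoC (d/2))) by (unfold RHP, Defs.Re; simpl; lra).
      specialize (H (RtoC (d/2))).
      assert (E : (RtoC 0 + RtoC (d/2))%C = RtoC (d/2)) by ring. rewrite E in H.
      rewrite Cmod_R, Rabs_pos_eq in H by lra.
      assert (H' : Cmod (gp (RtoC (d / 2)) - gp (RtoC 0))%C < ep) by (apply H; simpl; lra).
      rewrite Heq, Hc0 in H' by auto.
      assert (E2 : (p (RtoC (d / 2)) - Defs.C0)%C = p (RtoC (d / 2))) by (change Defs.C0 with (RtoC 0); ring).
      rewrite E2 in H'. pose proof (re_le_Cmod (p (RtoC (d / 2)))). pose proof (Hre _ Hs1).
      unfold Re in *. pose proof (Rle_abs (fst (p (RtoC (d / 2))))). lra.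
    + intros e He. destruct (Hgc (RtoC 0) H00 e He) as [d [Hd H]]. exists d; split; auto.
      intros s Hs Hsd. specialize (H s).
      assert (E : (RtoC 0 + s)%C = s :> C) by ring. rewrite E in H.
      change (Cmod (p s - gp (RtoC 0))%C < e). rewrite <- (Heq s Hs). apply H; auto.
      apply RHP_fst; auto.
  - split.
    + apply A0_intro with (g := fun s => ((s + gp s) * / (s + RtoC a))%C) (Linf := RtoC 1).
      * split.
        { intros s Hs. apply diffable_Cdiff.
          change (diffable (fun s => (s * / (s + RtoC a)) * (RtoC 1 + p s * / s))%C s).
          apply diffF; auto. apply Cdiff_diffable; auto. }
        exists (1 + M / a). intros s Hs. cbv beta. rewrite keyF by auto.
        change Cnorm with Cmod.
        pose proof (RHP_fst s Hs) as Hs'. pose proof (shift_nz s a Hs' Ha) as Hn.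
        destruct (Cmod_shift s a Hs' Ha) as [H1 H2].
        rewrite Cmod_mult, Cmod_inv by auto.
        pose proof (Cmod_triangle s (p s)). pose proof (HM' s Hs).
        apply Rle_mul_inv; [lra|].
        assert (M / a * Cmod (s + RtoC a)%C >= M).
        { assert (M / a * a = M) by (field; lra).
          assert (M / a >= 0) by (apply Rle_ge, Rdiv_le_0_compat; lra). nra. }
        nra.
      * intros s Hs. cbv beta. rewrite keyF by auto. rewrite Heq by auto. reflexivity.
      * intros s0 Hs0. apply cont_mul. apply cont_add; [apply cont_id| apply Hgc; auto].
        apply cont_inv. apply shift_nz; auto. apply cont_add; [apply cont_id|apply cont_const].
      * intros e He. exists ((M + 1 + a) / e). intros s Hs Hb.
        pose proof (shift_nz s a Hs Ha) as Hn.
        destruct (Cmod_shift s a Hs Ha) as [H1 H2].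
        replace ((s + gp s) * / (s + RtoC a) - RtoC 1)%C with ((gp s - RtoC a) * / (s + RtoC a))%C by (field; auto).
        rewrite Cmod_mult, Cmod_inv by auto.
        assert (Cmod (gp s - RtoC a)%C <= M + 1 + a).
        { pose proof (Cmod_triangle (gp s) (- RtoC a)%C). rewrite Cmod_opp, Cmod_R, Rabs_pos_eq in H by lra.
          pose proof (Hgb s Hs). unfold Cminus. lra. }
        apply Rlt_mul_inv; [lra|]. apply Rlt_div_l in Hb; [|lra]. nra.
    + exists (ep / (2 * a)). split. { apply Rdiv_lt_0_compat; lra. }
      split; [|split].
      * intros s Hs. apply diffable_Cdiff.
        change (diffable (fun s => (s * / (s + RtoC a)) * (RtoC 1 + p s * / s) + - RtoC (ep / (2 * a)))%C s).
        apply diffable_add; [|apply diffable_const]. apply diffF; auto. apply Cdiff_diffable; auto.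
      * intros x Hx. assert (Hs : RHP (RtoC x)) by (unfold RHP, Defs.Re; simpl; lra).
        change (Defs.RtoC x) with (RtoC x). cbv beta. rewrite keyF by auto.
        change (snd ((RtoC x + p (RtoC x)) * / (RtoC x + RtoC a))%C + - 0 = 0).
        rewrite Im_div by (apply shift_nz; simpl; lra).
        pose proof (Him x Hx) as Hv. destruct (p (RtoC x)) as [u v]. simpl in Hv. subst v.
        unfold Cplus, RtoC; cbn [fst snd]. unfold Rdiv. ring.
      * intros s Hs. cbv beta. rewrite keyF by auto.
        change (0 <= fst ((s + p s) * / (s + RtoC a))%C + - (ep / (2 * a))).
        pose proof (RHP_fst s Hs) as Hs'. pose proof (shift_nz s a Hs' Ha) as Hn.
        rewrite Re_div by auto. pose proof (den_pos _ Hn) as HD.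
        pose proof (Hre s Hs) as Hu. pose proof (HM' s Hs) as Hb.
        unfold RHP, Defs.Re in Hs.
        destruct (p s) as [u v]. destruct s as [x y].
        unfold Cplus, RtoC in *; cbn [fst snd] in *.
        unfold Cmod in Hb; cbn [fst snd] in Hb.
        assert (Huv : u ^ 2 + v ^ 2 <= M * M).
        { assert (0 <= u ^ 2 + v ^ 2) by nra. pose proof (pow2_sqrt _ H).
          pose proof (sqrt_pos (u ^ 2 + v ^ 2)). nra. }
        set (D := (x + a) ^ 2 + (y + 0) ^ 2) in *.
        replace (((x + u) * (x + a) + (y + v) * (y + 0)) / D + - (ep / (2 * a)))
          with ((2 * a * ((x + u) * (x + a) + (y + v) * (y + 0)) - ep * D) / (2 * a * D)) by (field; lra).
        apply Rdiv_le_0_compat; [|nra].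
        unfold D.
        assert (0 <= (a - ep) * (x * x)) by (apply Rmult_le_pos; [lra| pose proof (Rle_0_sqr x); unfold Rsqr in *; lra]).
        assert (0 <= a * x * (a - ep)) by (apply Rmult_le_pos; [apply Rmult_le_pos|]; lra).
        assert (0 <= a * u * x) by (apply Rmult_le_pos; [apply Rmult_le_pos|]; lra).
        assert (0 <= (a - ep) * (y * y)) by (apply Rmult_le_pos; [lra| pose proof (Rle_0_sqr y); unfold Rsqr in *; lra]).
        assert (0 <= a * ((v + y) * (v + y))) by (apply Rmult_le_pos; [lra| pose proof (Rle_0_sqr (v + y)); unfold Rsqr in *; lra]).
        assert (0 <= a * (a * ep - v * v)) by (apply Rmult_le_pos; [lra| pose proof (pow2_ge_0 u); assert (v ^ 2 = v * v) by ring; lra]).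
        assert (0 <= a * a * (u - ep)) by (apply Rmult_le_pos; [apply Rmult_le_pos|]; lra).
        nra.
Qed.

Lemma collect (Q : nat -> R -> Prop) (n : nat) :
  (forall i, (i < n)%nat -> exists a0, 0 < a0 /\ forall a, a0 <= a -> Q i a) ->
  exists A, 0 < A /\ forall i, (i < n)%nat -> forall a, A <= a -> Q i a.
Proof. induction n as [|n IH]; intros H.
  - exists 1; split; [lra|]. intros; lia.
  - destruct IH as [A [HA HQ]]. { intros i Hi; apply H; lia. }
    destruct (H n ltac:(lia)) as [a0 [Ha0 Hq]].
    exists (Rmax A a0). split. { eapply Rlt_le_trans; [exact HA| apply Rmax_l]. }
    intros i Hi a Ha. destruct (Nat.eq_dec i n) as [->|Hne].
    + apply Hq. eapply Rle_trans; [apply Rmax_r| exact Ha].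
    + apply HQ; [lia|]. eapply Rle_trans; [apply Rmax_l| exact Ha]. Qed.

Theorem lemma6 (n : nat) (p : nat -> Cx -> Cx) :
  (forall i : nat, (i < n)%nat -> ESPR (p i)) ->
  exists h : Cx -> Cx, PR h /\ A0 h /\
    forall i : nat, (i < n)%nat -> P_class h (p i).
Proof. intros H.
  destruct (collect (fun i a => P_class (hfun a) (p i)) n) as [A [HA HQ]].
  { intros i Hi. apply per_p. auto. }
  exists (hfun A). split; [apply hfun_PR; auto|]. split; [apply hfun_A0; auto|].
  intros i Hi. apply HQ; auto. lra. Qed.
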